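(* Let $H$ be a real Hilbert space and $A:H\to2^H$ a maximally monotone operator with $zer(A)\neq\emptyset$. Let $\varphi:[0,\infty)\to[0,\infty)$ be an increasing function vanishing only at $0$, and $(\gamma_n)$ a sequence in $(0,\infty)$ with $\sum_{n=0}^\infty\gamma_n^2=\infty$ having rate of divergence $\theta$. Let $b\in\mathbb{N}$, $p\in zer(A)$ and $C$ the closed ball of center $p$ and radius $b$. Suppose $A$ is uniformly monotone on $C$ with modulus $\varphi$. For $x\in C$ let $x_0:=x$ and $x_{n+1}:=J_{\gamma_nA}x_n$. Then $p$ is the unique zero of $A$ in $C$ and $(x_n)$ converges strongly to $p$ with rate of convergence $$\Psi_{b,\theta,\varphi}(k):=\theta\left(b^2\left(\left\lceil\frac{2b}{\varphi\left(\frac1{k+1}\right)}\right\rceil+1\right)^2\right)+1.$$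
   Context: $zer(A)=\{x:0\in A(x)\}$; $J_{\gamma A}:=(id_H+\gamma A)^{-1}$. $A$ is uniformly monotone on $C$ with modulus $\varphi$ if for all $x,y\in C$, $u\in A(x)$, $v\in A(y)$: $\langle x-y,u-v\rangle\ge\varphi(\|x-y\|)$. A rate of divergence for $\sum\gamma_n^2=\infty$ is $\theta:\mathbb{N}\to\mathbb{N}$ with $\sum_{n=0}^{\theta(K)}\gamma_n^2\ge K$ for all $K$. A rate of convergence of $a_n\to a$ is $\Phi$ with $\|a_n-a\|\le\frac1{k+1}$ for all $k$ and $n\ge\Phi(k)$. *)

(* Defs.v *)
From mathcomp Require Import all_boot all_order all_algebra.
From mathcomp Require Import all_classical all_reals all_analysis.
Import Order.TTheory GRing.Theory Num.Theory.
Import numFieldNormedType.Exports.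
Local Open Scope classical_set_scope.
Local Open Scope ring_scope.

Set Implicit Arguments.
Unset Strict Implicit.
Unset Printing Implicit Defensive.

Section Defs.
Variables (R : realType) (V : lmodType R).

Definition inner_product (ip : V -> V -> R) : Prop :=
  [/\ (forall x y, ip x y = ip y x),
      (forall (a : R) (x y z : V), ip (a *: x + y) z = a * ip x z + ip y z),
      (forall x, 0 <= ip x x) &
      (forall x, ip x x = 0 -> x = 0)].

Definition monotone_op (ip : V -> V -> R) (A : V -> set V) : Prop :=
  forall x y u v, A x u -> A y v -> 0 <= ip (x - y) (u - v).

Definition maximally_monotone (ip : V -> V -> R) (A : V -> set V) : Prop :=
  monotone_op ip A /\
  forall B : V -> set V, monotone_op ip B ->
    (forall x u, A x u -> B x u) -> forall x u, B x u -> A x u.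

Definition zer (A : V -> set V) : set V := [set x | A x 0].

(* y \in J_{gamma A} x  <->  x \in (id + gamma A) y *)
Definition resolvent (A : V -> set V) (gamma : R) (x y : V) : Prop :=
  exists u, A y u /\ x = y + gamma *: u.

End Defs.

Section Defs2.
Variables (R : realType) (V : normedModType R).

Definition uniformly_monotone_on (ip : V -> V -> R) (A : V -> set V)
    (C : set V) (phi : R -> R) : Prop :=
  forall x y u v, C x -> C y -> A x u -> A y v ->
    phi `|x - y| <= ip (x - y) (u - v).

Definition rate_of_convergence (a : nat -> V) (l : V) (Phi : nat -> nat) : Prop :=
  forall k n, (Phi k <= n)%N -> `|a n - l| <= k.+1%:R^-1.

End Defs2.

Definition rate_of_divergence (R : realType) (gamma : nat -> R)
    (theta : nat -> nat) : Prop :=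
  forall K : nat, K%:R <= \sum_(0 <= n < (theta K).+1) gamma n ^+ 2.

(* Psi_{b,theta,phi}(k) = theta(b^2 (ceil(2b / phi(1/(k+1))) + 1)^2) + 1 ;
   the ceiling is nonnegative under the hypotheses, so absz is harmless *)
Definition Psi (R : realType) (b : nat) (theta : nat -> nat) (phi : R -> R)
    (k : nat) : nat :=
  (theta (b ^ 2 * (`|Num.ceil (2 * b%:R / phi k.+1%:R^-1 : R)|%N + 1) ^ 2)%N).+1.

(* Main.v *)
Require Import Defs.
From mathcomp Require Import all_boot all_order all_algebra.
From mathcomp Require Import all_classical all_reals all_analysis.
Import Order.TTheory GRing.Theory Num.Theory.
Import numFieldNormedType.Exports.
Local Open Scope classical_set_scope.
Local Open Scope ring_scope.
From mathcomp Require Import ring lra.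

Section IP.
Variables (R : realType) (V : lmodType R) (ip : V -> V -> R).
Hypothesis Hip : inner_product ip.

Lemma ipDl x y z : ip (x + y) z = ip x z + ip y z.
Proof. by move: Hip => [_ L _ _]; have := L 1 x y z; rewrite scale1r mul1r. Qed.
Lemma ipZl a x z : ip (a *: x) z = a * ip x z.
Proof.
move: Hip => [_ L _ _]; have := L a x 0 z.
have h0 : ip 0 z = 0.
  have := L 1 0 0 z; rewrite scale1r addr0 mul1r => h; lra.
by rewrite addr0 h0 addr0.
Qed.
Lemma ipNl x z : ip (- x) z = - ip x z.
Proof. by rewrite -scaleN1r ipZl mulN1r. Qed.
Lemma ipC x y : ip x y = ip y x.
Proof. by move: Hip => [C _ _ _]. Qed.
Lemma ipDr x y z : ip z (x + y) = ip z x + ip z y.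
Proof. by rewrite ipC ipDl !(ipC z). Qed.
Lemma ipZr a x z : ip z (a *: x) = a * ip z x.
Proof. by rewrite ipC ipZl ipC. Qed.
Lemma ipNr x z : ip z (- x) = - ip z x.
Proof. by rewrite ipC ipNl ipC. Qed.

Lemma ip_expand x t u :
  ip (x + t *: u) (x + t *: u) = ip x x + 2 * t * ip x u + t ^+ 2 * ip u u.
Proof.
rewrite !ipDl !ipDr !ipZl !ipZr (ipC u x); lra.
Qed.
Lemma ip0r z : ip z 0 = 0.
Proof. by rewrite -(scale0r (0 : V)) ipZr mul0r. Qed.
End IP.

Lemma cs_aux (R : realType) (I E U : R) : 0 < I -> 0 <= E -> 0 <= U ->
  (forall t, 2 * t * I <= E + t ^+ 2 * U) -> I ^+ 2 <= E * U.
Proof.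
move=> I0 E0 U0 h.
have [U00|Upos] := eqVneq U 0.
  have := h ((E + 1) / (2 * I)); rewrite U00 mulr0 addr0.
  have -> : 2 * ((E + 1) / (2 * I)) * I = E + 1 by field; lra.
  lra.
have Upos' : 0 < U by rewrite lt_def Upos.
have := h (I / U).
have -> : 2 * (I / U) * I = 2 * (I ^+ 2 / U) by rewrite expr2; field.
have -> : (I / U) ^+ 2 * U = I ^+ 2 / U by rewrite expr2; field.
move=> H1.
have H2 : I ^+ 2 / U <= E by lra.
by rewrite -ler_pdivrMr.
Qed.

Theorem proposition5p2 (R : realType) (H : completeNormedModType R)
  (ip : H -> H -> R) (Hip : inner_product ip)
  (Hnorm : forall x : H, `|x| = Num.sqrt (ip x x))
  (A : H -> set H) (Amax : maximally_monotone ip A)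
  (Azer : zer A !=set0)
  (phi : R -> R)
  (phi_ge0 : forall t, 0 <= t -> 0 <= phi t)
  (phi_incr : forall s t, 0 <= s -> s <= t -> phi s <= phi t)
  (phi0 : forall t, 0 <= t -> (phi t = 0 <-> t = 0))
  (gamma : nat -> R) (gamma_gt0 : forall n, 0 < gamma n)
  (gamma_div : forall M : R, exists N : nat, M <= \sum_(0 <= n < N) gamma n ^+ 2)
  (theta : nat -> nat) (Htheta : rate_of_divergence gamma theta)
  (b : nat) (p : H) (Hp : zer A p)
  (Aunif : uniformly_monotone_on ip A [set y | `|y - p| <= b%:R] phi)
  (x : H) (Hx : `|x - p| <= b%:R)
  (xs : nat -> H) (Hx0 : xs 0%N = x)
  (Hxs : forall n, resolvent A (gamma n) (xs n) (xs n.+1)) :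
  (forall q, `|q - p| <= b%:R -> zer A q -> q = p) /\
  xs @ \oo --> p /\
  rate_of_convergence xs p (Psi b theta phi).
Proof.
have [_ _ ipge0 _] := Hip.
pose e n := xs n - p.
pose N (v : H) := ip v v.
have normE v : `|v| ^+ 2 = N v by rewrite Hnorm sqr_sqrtr.
have step n : exists u, A (xs n.+1) u /\ e n = e n.+1 + gamma n *: u.
  have [u [Au E]] := Hxs n; exists u; split => //.
  by rewrite /e E addrAC.
have mon n u : A (xs n.+1) u -> 0 <= ip (e n.+1) u.
  by move=> Au; have := Amax.1 _ _ _ _ Au Hp; rewrite subr0.
have dec n u : e n = e n.+1 + gamma n *: u ->
    N (e n) = N (e n.+1) + 2 * gamma n * ip (e n.+1) u + gamma n ^+ 2 * N u.
  by move=> ->; rewrite /N ip_expand.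
have fej n : N (e n.+1) <= N (e n).
  have [u [Au En]] := step n; rewrite (dec n u En).
  have h1 : 0 <= 2 * gamma n * ip (e n.+1) u.
    by rewrite mulr_ge0 ?mon // mulr_ge0 // ltW.
  have h2 : 0 <= gamma n ^+ 2 * N u by rewrite mulr_ge0 ?sqr_ge0 // ipge0.
  lra.
have fejm m n : (m <= n)%N -> N (e n) <= N (e m).
  move=> /subnK <-; elim: (n - m)%N => [|d IH]; first by rewrite add0n.
  by rewrite addSn; exact: le_trans (fej _) IH.
have normle m n : (m <= n)%N -> `|e n| <= `|e m|.
  by move=> mn; rewrite !Hnorm ler_sqrt //; exact: fejm.
have inC n : `|e n| <= b%:R.
  by apply: le_trans (normle 0%N n _) _ => //; rewrite /e Hx0.
have Nb n : N (e n) <= b%:R ^+ 2.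
  rewrite -normE; have := inC n; have := normr_ge0 (e n); nra.
have uniq : forall q, `|q - p| <= b%:R -> zer A q -> q = p.
  move=> q hq hz.
  have Cp : `|p - p| <= b%:R by rewrite subrr normr0.
  have := Aunif q p 0 0 hq Cp hz Hp.
  rewrite subrr ip0r //.
  move=> h; have h0 : phi `|q - p| = 0.
    by apply/eqP; rewrite eq_le h phi_ge0.
  by move/(phi0 _ (normr_ge0 _)): h0 => /normr0_eq0 /subr0_eq.
have key n (r : R) : 0 < r -> r < `|e n.+1| -> (0 < b)%N ->
    gamma n ^+ 2 * phi r ^+ 2 <= b%:R ^+ 2 * (N (e n) - N (e n.+1)).
  move=> r0 hr b0.
  have [u [Au En]] := step n.
  have eps0 : 0 < phi r.
    rewrite lt_def phi_ge0 ?ltW // andbT; apply/eqP.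
    by move/(phi0 _ (ltW r0)) => h; move: r0; rewrite h ltxx.
  have I1 : phi r <= ip (e n.+1) u.
    apply: le_trans (phi_incr _ _ (ltW r0) (ltW hr)) _.
    have Cp : `|p - p| <= b%:R by rewrite subrr normr0.
    by have := Aunif (xs n.+1) p u 0 (inC n.+1) Cp Au Hp; rewrite subr0.
  have CS : ip (e n.+1) u ^+ 2 <= N (e n.+1) * N u.
    apply: cs_aux; [exact: lt_le_trans eps0 I1 | exact: ipge0 | exact: ipge0 |].
    move=> t; have := ipge0 (e n.+1 + (- t) *: u).
    rewrite ip_expand // sqrrN -/(N _) -/(N u); lra.
  have h1 : phi r ^+ 2 <= ip (e n.+1) u ^+ 2.
    by rewrite !expr2; apply: ler_pM => //; apply: ltW.
  have h2 : ip (e n.+1) u ^+ 2 <= b%:R ^+ 2 * N u.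
    exact: le_trans CS (ler_wpM2r (ipge0 u) (Nb _)).
  have h3 : gamma n ^+ 2 * phi r ^+ 2 <= gamma n ^+ 2 * (b%:R ^+ 2 * N u).
    by rewrite ler_wpM2l ?sqr_ge0 //; exact: le_trans h1 h2.
  have h4 : 0 <= b%:R ^+ 2 * (2 * gamma n * ip (e n.+1) u).
    by rewrite mulr_ge0 ?sqr_ge0 // mulr_ge0 ?mon // mulr_ge0 // ltW.
  rewrite (dec n u En); lra.
have sum (r : R) M : 0 < r -> (0 < b)%N ->
    (forall m, (m < M)%N -> r < `|e m.+1|) ->
    (\sum_(0 <= i < M) gamma i ^+ 2) * phi r ^+ 2
      <= b%:R ^+ 2 * (N (e 0%N) - N (e M)).
  move=> r0 b0; elim: M => [|M IH] h.
    by rewrite big_geq // mul0r subrr mulr0.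
  rewrite big_nat_recr //= mulrDl.
  have := IH (fun m hm => h m (leq_trans hm (leqnSn M))).
  have := key M r r0 (h M (ltnSn M)) b0; lra.
have rate : rate_of_convergence xs p (Psi b theta phi).
  move=> k n hn; change (`|e n| <= k.+1%:R^-1).
  have r0 : 0 < k.+1%:R^-1 :> R by rewrite invr_gt0 ltr0Sn.
  case: (ltnP 0 b) => b0; last first.
    move: b0; rewrite leqn0 => /eqP b0.
    by have := inC n; rewrite b0 => h; exact: le_trans h (ltW r0).
  rewrite leNgt; apply/negP => hr.
  pose r : R := k.+1%:R^-1; pose eps := phi r.
  pose c := `|Num.ceil (2 * b%:R / eps)|%N.
  pose K := (b ^ 2 * (c + 1) ^ 2)%N.
  have hn' : ((theta K).+1 <= n)%N by exact: hn.
  have hs : (\sum_(0 <= i < (theta K).+1) gamma i ^+ 2) * eps ^+ 2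
      <= b%:R ^+ 2 * (N (e 0%N) - N (e (theta K).+1)) := sum r (theta K).+1 r0 b0
    (fun m hm => lt_le_trans hr (normle _ _ (leq_trans hm hn'))).
  have hK := Htheta K.
  have eps0 : 0 < eps.
    rewrite lt_def phi_ge0 ?ltW // andbT; apply/eqP.
    by move/(phi0 _ (ltW r0)) => h; move: r0; rewrite h ltxx.
  have hc : 2 * b%:R / eps <= c%:R.
    rewrite natr_absz; apply: le_trans (ceil_ge _) _.
    by rewrite ler_int; exact: ler_norm.
  have hc' : 2 * b%:R <= c%:R * eps by rewrite -ler_pdivrMr.
  have KE : K%:R = b%:R ^+ 2 * (c%:R + 1) ^+ 2 :> R.
    by rewrite /K natrM !natrX natrD.
  have bpos : 0 < b%:R :> R by rewrite ltr0n.
  have hX : b%:R < (c%:R + 1) * eps by lra.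
  have hX2 : b%:R ^+ 2 < ((c%:R + 1) * eps) ^+ 2.
    by rewrite !expr2; apply: ltr_pM => //; apply: ltW.
  have hX4 : b%:R ^+ 2 * b%:R ^+ 2 < b%:R ^+ 2 * ((c%:R + 1) * eps) ^+ 2.
    by rewrite ltr_pM2l // exprn_gt0.
  have h5 : K%:R * eps ^+ 2 <= (\sum_(0 <= i < (theta K).+1) gamma i ^+ 2) * eps ^+ 2.
    by rewrite ler_wpM2r ?sqr_ge0.
  have h6 : b%:R ^+ 2 * (N (e 0%N) - N (e (theta K).+1)) <= b%:R ^+ 2 * b%:R ^+ 2.
    rewrite ler_wpM2l ?sqr_ge0 //; have := Nb 0%N; have := ipge0 (e (theta K).+1).
    rewrite -/(N _); lra.
  rewrite KE exprMn in hX4 h5; lra.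
split; first exact: uniq.
split; last exact: rate.
apply/cvgrPdist_le => eps eps0.
have [k _ hk] := near_infty_natSinv_lt (PosNum eps0).
have {}hk := hk k (leqnn k).
near=> n; rewrite distrC; apply: le_trans (rate k n _) (ltW hk).
by near: n; exact: nbhs_infty_ge.
Unshelve. all: by end_near.
Qed.
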